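(* Let $n\ge 1$. (i) Let $p_0 > 1$ be such that $U(n,p_0) = 1$ (i.e. the identity matrix is optimal at $p_0$). Then for every $1 \le p < p_0$ we have $U(n,p)=1$, and every $n\times n$ real matrix $A$ whose rows are $\ell_p$-unit vectors and with $\mathrm{per}(A)=1$ has each row equal to $\pm$ a standard basis vector. (ii) Let $1\le p_0<\infty$ be such that $U(n,p_0) = n!/n^{n/p_0}$ (i.e. the matrix all of whose entries equal $n^{-1/p_0}$ is optimal at $p_0$). Then for every $p_0 < p < \infty$ we have $U(n,p) = n!/n^{n/p}$, and every $n\times n$ real matrix $A$ whose rows are $\ell_p$-unit vectors and with $\mathrm{per}(A) = n!/n^{n/p}$ has all entries of absolute value $n^{-1/p}$.
   Context: For $n\ge 1$ and $1 \le p \le \infty$, $U(n,p)$ denotes the maximum of $\mathrm{per}(A)=\sum_{\sigma\in S_n}\prod_{i=1}^n a_{i\sigma(i)}$ over all real $n\times n$ matrices $A$ each of whose rows has $\ell_p$-norm equal to $1$. *)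

(* Defs.v *)
From HB Require Import structures.
From mathcomp Require Import all_boot all_order all_algebra all_fingroup.
From mathcomp Require Import all_classical all_reals all_analysis.
Set Implicit Arguments. Unset Strict Implicit. Unset Printing Implicit Defensive.
Import Order.TTheory GRing.Theory Num.Theory.
Local Open Scope ring_scope.
Local Open Scope classical_set_scope.

Definition per (R : realType) (n : nat) (A : 'M[R]_n) : R :=
  \sum_(s : 'S_n) \prod_(i < n) A i (s i).

Definition row_lp_unit (R : realType) (n : nat) (p : \bar R) (A : 'M[R]_n) (i : 'I_n) : Prop :=
  match p with
  | EFin q => (\sum_(j < n) `|A i j| `^ q) `^ q^-1 = 1
  | +oo%E => \big[Num.max/0]_(j < n) `|A i j| = 1
  | -oo%E => False
  end.

Definition rows_lp_unit (R : realType) (n : nat) (p : \bar R) (A : 'M[R]_n) : Prop :=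
  forall i, row_lp_unit p A i.

(* U(n,p): the maximum (= supremum, attained by compactness) of per over
   matrices whose rows are l_p unit vectors *)
Definition U (R : realType) (n : nat) (p : \bar R) : R :=
  sup [set per A | A in [set A : 'M[R]_n | rows_lp_unit p A]].

(* Main.v *)
Require Import Defs.
From HB Require Import structures.
From mathcomp Require Import all_boot all_order all_algebra all_fingroup.
From mathcomp Require Import all_classical all_reals all_analysis.
From mathcomp Require Import ring lra.
Import Order.TTheory GRing.Theory Num.Theory.
Local Open Scope ring_scope.
Set Implicit Arguments. Unset Strict Implicit. Unset Printing Implicit Defensive.

Lemma amgm (R : realType) (r t : R) : 0 < r < 1 -> 0 <= t ->
  t `^ r <= r * t + (1 - r) /\ (t `^ r = r * t + (1 - r) -> t = 1).
Proof.
move=> /andP[r0 r1]; rewrite le_eqVlt => /orP[/eqP<-|t0].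
  rewrite powR0 ?gt_eqF //; split; first lra.
  move=> h; lra.
have Em : t `^ r = expR (r * ln t) by rewrite /powR gt_eqF.
set m := r * ln t.
have e0 : 0 < expR m := expR_gt0 m.
have Ht : t = expR m * expR (ln t - m) by rewrite -expRD addrC subrK lnK.
have H1 : 1 = expR m * expR (0 - m) by rewrite -expRD addrC subrK expR0.
have Ht' : expR m * (1 + (ln t - m)) <= t.
  by rewrite {2}Ht ler_pM2l // expR_ge1Dx.
have H1' : expR m * (1 + (0 - m)) <= 1.
  by rewrite {2}H1 ler_pM2l // expR_ge1Dx.
have key : r * (expR m * (1 + (ln t - m))) + (1 - r) * (expR m * (1 + (0 - m))) = expR m.
  rewrite /m; ring.
rewrite Em; split.
  have a1 := ler_wpM2l (ltW r0) Ht'.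
  have r1' : 0 <= 1 - r by lra.
  have a2 := ler_wpM2l r1' H1'.
  lra.
move=> heq; apply/eqP; apply/negPn/negP => tn1.
have lnt : ln t != 0 by rewrite ln_eq0.
have Ht2 : expR m * (1 + (ln t - m)) < t.
  rewrite {2}Ht ltr_pM2l // expR_gt1Dx // /m.
  have -> : ln t - r * ln t = (1 - r) * ln t by ring.
  by rewrite mulf_neq0 // subr_eq0 gt_eqF.
have : r * (expR m * (1 + (ln t - m))) + (1 - r) * (expR m * (1 + (0 - m))) < r * t + (1 - r).
  have r1' : 0 <= 1 - r by lra.
  have a1 : r * (expR m * (1 + (ln t - m))) < r * t by rewrite ltr_pM2l.
  have a2 := ler_wpM2l r1' H1'.
  lra.
rewrite key heq; lra.
Qed.

Definition nrm (R : realType) (n : nat) (q : \bar R) (v : 'I_n -> R) : R :=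
  match q with
  | EFin q => (\sum_(j < n) `|v j| `^ q) `^ q^-1
  | +oo%E => \big[Num.max/0]_(j < n) `|v j|
  | -oo%E => 0
  end.

Lemma row_unitE (R : realType) (n : nat) (p : \bar R) (A : 'M[R]_n) i :
  p != -oo%E -> row_lp_unit p A i <-> nrm p (fun j => A i j) = 1.
Proof. by case: p. Qed.

Lemma powR_inv_id (R : realType) (x q : R) : 0 <= x -> q != 0 ->
  (x `^ q) `^ q^-1 = x.
Proof. by move=> x0 q0; rewrite -powRrM divff // powRr1. Qed.

Lemma nrm_ge (R : realType) (n : nat) (q : \bar R) (v : 'I_n -> R) j :
  (0 < q)%E -> `|v j| <= nrm q v.
Proof.
case: q => [q||] //=; last by move=> _; exact: le_bigmax.
rewrite lte_fin => q0.
rewrite -{1}(@powR_inv_id _ `|v j| q) // ?gt_eqF //.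
apply: ge0_ler_powR.
- by rewrite invr_ge0 ltW.
- by rewrite nnegrE powR_ge0.
- by rewrite nnegrE sumr_ge0 // => *; rewrite powR_ge0.
by rewrite (bigD1 j) //= lerDl sumr_ge0 // => *; rewrite powR_ge0.
Qed.

Lemma nrm_ge0 (R : realType) (n : nat) (q : \bar R) (v : 'I_n -> R) :
  0 <= nrm q v.
Proof.
case: q => [q||] /=; rewrite ?powR_ge0 //.
by apply: bigmax_ge_id.
Qed.

Lemma powRV (R : realType) (x s : R) : 0 < x -> (x^-1) `^ s = (x `^ s)^-1.
Proof.
move=> x0; have : (x * x^-1) `^ s = 1 by rewrite divff ?gt_eqF // powR1.
rewrite powRM ?invr_ge0 ?ltW // => h.
by rewrite -[LHS]mul1r -(mulVf (x := x `^ s)) ?gt_eqF ?powR_gt0 // -mulrA h mulr1.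
Qed.

Lemma nrm_scale (R : realType) (n : nat) (q : \bar R) (v : 'I_n -> R) (d : R) :
  (0 < q)%E -> 0 < d -> nrm q (fun j => v j / d) = nrm q v / d.
Proof.
case: q => [q||] //= q0 d0; have hd : 0 <= d^-1 by rewrite invr_ge0 ltW.
  rewrite lte_fin in q0.
  under eq_bigr => j _ do rewrite normrM (ger0_norm hd) (powRM _ (normr_ge0 _) hd).
  rewrite -mulr_suml powRM ?powR_ge0 //; last by rewrite sumr_ge0 // => *; rewrite powR_ge0.
  by rewrite powR_inv_id ?gt_eqF.
have hm : {morph (fun x : R => x / d) : x y / Num.max x y >-> Num.max x y}.
  by move=> x y /=; rewrite maxr_pMl // invr_ge0 ltW.
rewrite (big_morph _ hm (mul0r _)).
by apply: eq_bigr => j _; rewrite normrM (ger0_norm hd).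
Qed.

Lemma powR_eq1_base (R : realType) (x p : R) : 0 <= x -> p != 0 -> x `^ p = 1 -> x = 1.
Proof.
move=> x0 p0 /eqP; rewrite powR_eq1 => /orP[/eqP//|/orP[|/eqP]].
  by rewrite ltNge x0.
by move=> h; rewrite h eqxx in p0.
Qed.

Lemma sum_one (R : realType) (n : nat) (p : R) (v : 'I_n -> R) : 0 < p ->
  nrm p%:E v = 1 -> \sum_(j < n) `|v j| `^ p = 1.
Proof.
move=> p0 /= h; apply: powR_eq1_base h.
  by rewrite sumr_ge0 // => *; rewrite powR_ge0.
by rewrite invr_eq0 gt_eqF.
Qed.

Lemma exists_nz (R : realType) (n : nat) (p : R) (v : 'I_n -> R) : 0 < p ->
  \sum_(j < n) `|v j| `^ p = 1 -> exists j, v j != 0.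
Proof.
move=> p0 h; case: (pselect (exists j, v j != 0)) => // H.
have H0 : forall j, v j = 0.
  by move=> j; apply/eqP; apply/negPn/negP => hj; apply: H; exists j.
move: h; rewrite big1 => [/eqP|j _]; first by rewrite eq_sym oner_eq0.
by rewrite H0 normr0 powR0 // gt_eqF.
Qed.

Lemma per_le (R : realType) (n : nat) (B : 'M[R]_n) :
  (forall i j, `|B i j| <= 1) -> per B <= (n`!)%:R.
Proof.
move=> hB; apply: le_trans (ler_norm _) _.
apply: le_trans (ler_norm_sum _ _ _) _.
rewrite -card_Sn -sumr_const.
apply: ler_sum => s _; rewrite normr_prod.
by apply: prodr_ile1 => i _; rewrite normr_ge0 hB.
Qed.

Lemma U_ub (R : realType) (n : nat) (q : \bar R) (c : R) :
  (forall B : 'M[R]_n, rows_lp_unit q B -> forall i j, `|B i j| <= 1) ->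
  U n q = c -> forall B : 'M[R]_n, rows_lp_unit q B -> per B <= c.
Proof.
move=> hb <- B hB; rewrite /U.
apply: ub_le_sup; last by exists B.
exists (n`!)%:R => x [C hC <-]; exact: per_le (hb C hC).
Qed.

Lemma U_eq (R : realType) (n : nat) (q : \bar R) (v : R) (B0 : 'M[R]_n) :
  rows_lp_unit q B0 -> per B0 = v ->
  (forall B : 'M[R]_n, rows_lp_unit q B -> per B <= v) -> U n q = v.
Proof.
move=> h0 e0 hub; rewrite /U; apply/eqP; rewrite eq_le; apply/andP; split.
  by apply: ge_sup; [exists v; exists B0 | move=> x [C hC <-]; exact: hub].
apply: ub_le_sup; last by exists B0.
by exists v => x [C hC <-]; exact: hub.
Qed.

Lemma unit_bound (R : realType) (n : nat) (q : \bar R) :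
  (0 < q)%E -> forall B : 'M[R]_n, rows_lp_unit q B -> forall i j, `|B i j| <= 1.
Proof.
move=> q0 B hB i j; have := hB i; rewrite row_unitE; last by apply/eqP => qn; rewrite qn in q0.
by move=> <-; apply: nrm_ge.
Qed.

Lemma prod_eq1 (R : realType) (n : nat) (e : 'I_n -> R) :
  (forall k, 0 < e k <= 1) -> \prod_(k < n) e k = 1 -> forall i, e i = 1.
Proof.
move=> he h1 i; have := he i => /andP[e0 e1].
have : \prod_(k < n) e k <= e i.
  rewrite (bigD1 i) //= ler_piMr ?(ltW e0) //.
  by apply: prodr_ile1 => k _; have /andP[a b] := he k; rewrite ltW.
rewrite h1 => h; apply/eqP; rewrite eq_le e1 h.
by [].
Qed.

Lemma prod_le1 (R : realType) (n : nat) (e : 'I_n -> R) :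
  (forall k, 0 < e k <= 1) -> 0 < \prod_(k < n) e k <= 1.
Proof.
move=> he; rewrite prodr_gt0 /=; last by move=> k _; have /andP[] := he k.
by apply: prodr_ile1 => k _; have /andP[a b] := he k; rewrite ltW.
Qed.

Definition rnrm (R : realType) (n : nat) (q : \bar R) (A : 'M[R]_n) i :=
  nrm q (fun j => A i j).
Definition rscale (R : realType) (n : nat) (q : \bar R) (A : 'M[R]_n) : 'M[R]_n :=
  \matrix_(i, j) (A i j / rnrm q A i).

Lemma transfer (R : realType) (n : nat) (q : \bar R) (A : 'M[R]_n) :
  (0 < q)%E -> (forall i, exists j, A i j != 0) ->
  (forall i, 0 < rnrm q A i) /\ rows_lp_unit q (rscale q A) /\
  per A = \prod_(i < n) rnrm q A i * per (rscale q A).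
Proof.
move=> q0 hA.
have dpos : forall i, 0 < rnrm q A i.
  move=> i; have [j hj] := hA i.
  by apply: lt_le_trans (@nrm_ge _ _ _ (fun k => A i k) j q0); rewrite normr_gt0.
split => //; split.
  move=> i; rewrite row_unitE; last by apply/eqP => qn; rewrite qn in q0.
  have -> : (fun j => rscale q A i j) = (fun j => A i j / rnrm q A i).
    by apply: funext => j; rewrite mxE.
  by rewrite (nrm_scale _ q0 (dpos i)) divff // gt_eqF // dpos.
rewrite /per mulr_sumr; apply: eq_bigr => s _.
rewrite -big_split /=; apply: eq_bigr => i _.
by rewrite mxE mulrC divfK // gt_eqF.
Qed.

Lemma pow_mono (R : realType) (a p q : R) : 0 <= a <= 1 -> 0 < p < q ->
  a `^ q <= a `^ p /\ (a `^ q = a `^ p -> a = 0 \/ a = 1).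
Proof.
move=> /andP[a0 a1] /andP[p0 pq].
case: (eqVneq a 0) => [->|an0].
  by rewrite !powR0 ?gt_eqF //; last exact: lt_trans pq; split => //; left.
have apos : 0 < a by rewrite lt_def an0.
rewrite /powR (negbTE an0); have hl := ln_le0 a1.
split; first by rewrite ler_expR; nra.
move/expR_inj => h; right.
have : (q - p) * ln a = 0 by rewrite mulrBl h subrr.
move/eqP; rewrite mulf_eq0 subr_eq0 gt_eqF //= ln_eq0 // => /eqP//.
Qed.

Lemma bigmax_att (R : realType) (n : nat) (F : 'I_n -> R) :
  \big[Num.max/0]_(j < n) F j = 0 \/ exists j, \big[Num.max/0]_(j < n) F j = F j.
Proof.
apply: (big_ind (fun x => x = 0 \/ exists j, x = F j)); first by left.
  move=> x y hx hy; case: (leP x y) => _; [exact: hy | exact: hx].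
by move=> j _; right; exists j.
Qed.

Lemma single (R : realType) (n : nat) (p : R) (v : 'I_n -> R) j : 0 < p ->
  \sum_(k < n) `|v k| `^ p = 1 -> `|v j| = 1 ->
  exists j (e : R), (e = 1 \/ e = -1) /\ forall k, v k = if k == j then e else 0.
Proof.
move=> p0 hs hj; exists j, (v j); split.
  case: (lerP 0 (v j)) => h.
    by left; rewrite -hj ger0_norm.
  by right; rewrite -hj ltr0_norm // opprK.
move=> k; case: eqP => [->//|/eqP kj].
move: hs; rewrite (bigD1 j) //= hj powR1 /= => hs.
have h0 : \sum_(i < n | i != j) `|v i| `^ p = 0 by lra.
by have := psumr_eq0P (fun i _ => powR_ge0 _ _) h0 kj => /powR_eq0_eq0 /normr0_eq0.
Qed.

Lemma nrm_p1 (R : realType) (n : nat) (p : R) (v : 'I_n -> R) :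
  \sum_(k < n) `|v k| `^ p = 1 -> nrm p%:E v = 1.
Proof. by move=> /= ->; rewrite powR1. Qed.

Lemma le_nrm_i (R : realType) (n : nat) (p : R) (q : \bar R) (v : 'I_n -> R) :
  1 <= p -> (p%:E < q)%E -> \sum_(k < n) `|v k| `^ p = 1 ->
  nrm q v <= 1 /\ (nrm q v = 1 ->
  exists j (e : R), (e = 1 \/ e = -1) /\ forall k, v k = if k == j then e else 0).
Proof.
move=> p1 pq hs.
have p0 : 0 < p by apply: lt_le_trans ltr01 p1.
have vb : forall j, `|v j| <= 1.
  by move=> j; rewrite -(nrm_p1 hs); apply: nrm_ge; rewrite lte_fin.
have pm : forall (q' : R) j, p < q' -> `|v j| `^ q' <= `|v j| `^ p /\
     (`|v j| `^ q' = `|v j| `^ p -> `|v j| = 0 \/ `|v j| = 1).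
  by move=> q' j pq'; apply: pow_mono; rewrite ?normr_ge0 ?vb ?p0.
case: q pq => [q||] //= pq; last first.
  split; first by apply: bigmax_le => // j _; exact: vb.
  case: (bigmax_att (fun j => `|v j|)) => [->|[j ->] hj]; first by move/eqP; rewrite eq_sym oner_eq0.
  exact: single p0 hs hj.
rewrite lte_fin in pq; have q0 : 0 < q by apply: lt_trans p0 pq.
have hle : \sum_(k < n) `|v k| `^ q <= 1.
  by rewrite -hs; apply: ler_sum => j _; have [] := pm q j pq.
split.
  have e1 : 1 `^ q^-1 = 1 :> R by rewrite powR1.
  rewrite -[X in _ <= X]e1; apply: ge0_ler_powR => //; rewrite ?invr_ge0 ?ltW ?nnegrE //.
  by rewrite sumr_ge0 // => *; rewrite powR_ge0.
move=> h; have hq1 : \sum_(k < n) `|v k| `^ q = 1.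
  apply: powR_eq1_base h; last by rewrite invr_eq0 gt_eqF.
  by rewrite sumr_ge0 // => *; rewrite powR_ge0.
have hd : \sum_(k < n) (`|v k| `^ p - `|v k| `^ q) = 0 by rewrite sumrB hs hq1 subrr.
have [j hj] := exists_nz p0 hs.
have : `|v j| `^ p - `|v j| `^ q = 0.
  have hnn : forall k : 'I_n, true -> 0 <= `|v k| `^ p - `|v k| `^ q.
    by move=> k _; rewrite subr_ge0; have [] := pm q k pq.
  exact: (psumr_eq0P hnn hd).
move/eqP; rewrite subr_eq0 eq_sym => /eqP /(proj2 (pm q j pq)) [/normr0_eq0 h0|h1].
  by rewrite h0 eqxx in hj.
exact: single p0 hs h1.
Qed.

Lemma powmean (R : realType) (n : nat) (y : 'I_n -> R) (r : R) : (0 < n)%N ->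
  0 < r < 1 -> (forall j, 0 <= y j) -> \sum_(j < n) y j = 1 ->
  \sum_(j < n) y j `^ r <= n%:R `^ (1 - r) /\
  (\sum_(j < n) y j `^ r = n%:R `^ (1 - r) -> forall j, y j = n%:R^-1).
Proof.
move=> n0 hr y0 hs.
have nR0 : 0 < n%:R :> R by rewrite ltr0n.
set c := (n%:R^-1) `^ r.
have c0 : 0 < c by rewrite powR_gt0 // invr_gt0.
have ey : forall j, y j `^ r = c * (n%:R * y j) `^ r.
  move=> j; rewrite /c -powRM.
  - by rewrite mulrA mulVf ?gt_eqF // mul1r.
  - by rewrite invr_ge0 ltW.
  - by rewrite mulr_ge0 ?y0 // ltW.
have hb : forall j, (n%:R * y j) `^ r <= r * (n%:R * y j) + (1 - r) /\
   ((n%:R * y j) `^ r = r * (n%:R * y j) + (1 - r) -> n%:R * y j = 1).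
  move=> k; apply: amgm => //; by rewrite mulr_ge0 ?y0 // ltW.
have hsum : \sum_(j < n) c * (r * (n%:R * y j) + (1 - r)) = n%:R `^ (1 - r).
  rewrite -mulr_sumr big_split /= -mulr_sumr -mulr_sumr hs mulr1 sumr_const card_ord.
  have e1 : n%:R `^ (1 - r) = n%:R / n%:R `^ r.
    rewrite powRB; last by apply/implyP => _; rewrite pnatr_eq0 -lt0n.
    by rewrite powRr1 // ltW.
  have e2 : c = (n%:R `^ r)^-1 by rewrite /c powRV.
  have e3 : 0 < n%:R `^ r :> R by rewrite powR_gt0.
  rewrite e1 e2 -mulr_natr; field; by rewrite ?mul1r gt_eqF.
split.
  rewrite -hsum; apply: ler_sum => j _; rewrite ey ler_pM2l //; by have [] := hb j.
move=> heq j.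
have hd : \sum_(k < n) (c * (r * (n%:R * y k) + (1 - r)) - y k `^ r) = 0.
  by rewrite sumrB hsum heq subrr.
have hnn : forall k : 'I_n, true -> 0 <= c * (r * (n%:R * y k) + (1 - r)) - y k `^ r.
  by move=> k _; rewrite subr_ge0 ey ler_pM2l //; have [] := hb k.
have := @psumr_eq0P _ _ _ _ hnn hd j isT => /eqP; rewrite subr_eq0 ey => /eqP.
move/(mulfI (lt0r_neq0 c0)) => /esym /(proj2 (hb j)) h.
by apply: (mulfI (lt0r_neq0 nR0)); rewrite h mulfV // lt0r_neq0.
Qed.

Lemma le_nrm_ii (R : realType) (n : nat) (p0 p : R) (v : 'I_n -> R) :
  (0 < n)%N -> 1 <= p0 -> p0 < p -> \sum_(k < n) `|v k| `^ p = 1 ->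
  nrm p0%:E v <= (n%:R `^ (1 - p0 / p)) `^ p0^-1 /\
  (nrm p0%:E v = (n%:R `^ (1 - p0 / p)) `^ p0^-1 ->
     forall j, `|v j| = n%:R `^ (- p^-1)).
Proof.
move=> n0 p01 pp hs.
have p00 : 0 < p0 by apply: lt_le_trans ltr01 p01.
have p0' : 0 < p by apply: lt_trans p00 pp.
have nR0 : 0 < n%:R :> R by rewrite ltr0n.
set r := p0 / p.
have hr : 0 < r < 1.
  by rewrite divr_gt0 //= ltr_pdivrMr // mul1r.
have ey : forall k, `|v k| `^ p0 = (`|v k| `^ p) `^ r.
  by move=> k; rewrite -powRrM /r mulrC divfK // gt_eqF.
have [hle heq] := powmean n0 hr (fun k => powR_ge0 `|v k| p) hs.
have hsr : \sum_(k < n) `|v k| `^ p0 = \sum_(k < n) (`|v k| `^ p) `^ r.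
  by apply: eq_bigr => k _; rewrite ey.
have s0 : 0 <= \sum_(k < n) `|v k| `^ p0 by rewrite sumr_ge0 // => *; rewrite powR_ge0.
split.
  rewrite /= hsr; apply: ge0_ler_powR.
  - by rewrite invr_ge0 ltW.
  - by rewrite nnegrE -hsr.
  - by rewrite nnegrE powR_ge0.
  - exact: hle.
move=> /= h j.
have h2 : \sum_(k < n) (`|v k| `^ p) `^ r = n%:R `^ (1 - r).
  rewrite -hsr; apply: (powR_injective (r := p0^-1)).
  - by rewrite invr_gt0.
  - by rewrite nnegrE.
  - by rewrite nnegrE powR_ge0.
  - exact: h.
have := heq h2 j => hj.
rewrite -(@powR_inv_id _ `|v j| p) ?normr_ge0 ?gt_eqF // hj powRV // powRN.
by [].
Qed.

Lemma per1 (R : realType) (n : nat) : per (1%:M : 'M[R]_n) = 1.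
Proof.
rewrite /per (bigD1 1%g) //= [X in _ + X]big1.
  by rewrite addr0; apply: big1 => i _; rewrite perm1 mxE eqxx.
move=> s hs; case: (pselect (exists i, s i != i)) => [[i hi]|H].
  by rewrite (bigD1 i) //= mxE eq_sym (negbTE hi) mul0r.
exfalso; move/eqP: hs; apply; apply/permP => i; rewrite perm1.
by apply/eqP; apply/negPn/negP => hi; apply: H; exists i.
Qed.

Lemma rows1 (R : realType) (n : nat) (p : R) : 0 < p ->
  rows_lp_unit p%:E (1%:M : 'M[R]_n).
Proof.
move=> p0 i /=; rewrite (bigD1 i) //= big1 ?addr0.
  by rewrite mxE eqxx normr1 !powR1.
by move=> j hj; rewrite mxE eq_sym (negbTE hj) normr0 powR0 // gt_eqF.
Qed.

Lemma nE (R : realType) (n : nat) (x : R) : (0 < n)%N ->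
  n%:R `^ x = expR (x * ln n%:R).
Proof. by move=> n0; rewrite /powR gt_eqF ?ltr0n. Qed.

Lemma rowsC (R : realType) (n : nat) (p : R) : (0 < n)%N -> 0 < p ->
  rows_lp_unit p%:E (const_mx (n%:R `^ (- p^-1)) : 'M[R]_n).
Proof.
move=> n0 p0 i /=.
have nR0 : 0 < n%:R :> R by rewrite ltr0n.
have e : forall j, `|(const_mx (n%:R `^ (- p^-1)) : 'M[R]_n) i j| `^ p = n%:R^-1.
  move=> j; rewrite mxE ger0_norm ?powR_ge0 // -powRrM mulNr.
  rewrite mulVf; last by rewrite gt_eqF.
  by rewrite powR_inv1 // ltW.
under eq_bigr => j _ do rewrite e.
rewrite sumr_const card_ord -[n%:R^-1 *+ n]mulr_natr mulVf; last by rewrite gt_eqF.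
by rewrite powR1.
Qed.

Lemma perC (R : realType) (n : nat) (p : R) : (0 < n)%N ->
  per (const_mx (n%:R `^ (- p^-1)) : 'M[R]_n) = (n`!)%:R / (n%:R `^ (n%:R / p)).
Proof.
move=> n0; rewrite /per.
under eq_bigr => s _ do under eq_bigr => i _ do rewrite mxE.
rewrite prodr_const card_ord sumr_const card_Sn !nE // -expRM_natr.
rewrite -[expR _ *+ _]mulr_natr mulrC -expRN.
by congr (_ * expR _); ring.
Qed.

Lemma unit_sum (R : realType) (n : nat) (p : R) (A : 'M[R]_n) : 0 < p ->
  rows_lp_unit p%:E A -> forall i, \sum_(k < n) `|A i k| `^ p = 1.
Proof.
move=> p0 hA i; apply: (sum_one (v := fun k => A i k)) => //.
by have := hA i; rewrite row_unitE.
Qed.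

Theorem lemma1p2 (R : realType) (n : nat) (hn : (0 < n)%N) :
  (* (i) *)
  (forall p0 : \bar R, (1%:E < p0)%E -> U n p0 = 1 ->
     forall p : R, 1 <= p -> (p%:E < p0)%E ->
       U n p%:E = 1 /\
       (forall A : 'M[R]_n, rows_lp_unit p%:E A -> per A = 1 ->
          forall i : 'I_n, exists (j : 'I_n) (e : R), (e = 1 \/ e = -1) /\
            forall k : 'I_n, A i k = (if k == j then e else 0)))
  /\
  (* (ii) *)
  (forall p0 : R, 1 <= p0 ->
     U n p0%:E = (n`!)%:R / (n%:R `^ (n%:R / p0)) ->
     forall p : R, p0 < p ->
       U n p%:E = (n`!)%:R / (n%:R `^ (n%:R / p)) /\
       (forall A : 'M[R]_n, rows_lp_unit p%:E A ->
          per A = (n`!)%:R / (n%:R `^ (n%:R / p)) ->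
          forall i j : 'I_n, `|A i j| = n%:R `^ (- p^-1))).
Proof.
split.
  move=> p0 h1 hU p p1 pp.
  have q0 : (0 < p0)%E by apply: lt_trans h1; rewrite lte_fin.
  have p0' : 0 < p by apply: lt_le_trans ltr01 p1.
  have hub := U_ub (unit_bound q0) hU.
  have key : forall A : 'M[R]_n, rows_lp_unit p%:E A -> per A <= 1 /\
     (per A = 1 -> forall i, rnrm p0 A i = 1).
    move=> A hA.
    have hs := unit_sum p0' hA.
    have hnz : forall i, exists j, A i j != 0.
      by move=> i; apply: (exists_nz (p := p)) => //; exact: hs i.
    have [dpos [hB hper]] := transfer q0 hnz.
    have dle : forall i, 0 < rnrm p0 A i <= 1.
      move=> i; rewrite dpos /=.
      by have [] := le_nrm_i (v := fun k => A i k) p1 pp (hs i).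
    have /andP[P0 P1] := prod_le1 dle.
    have hb := hub _ hB.
    set P := \prod_(i < n) rnrm p0 A i in hper P0 P1.
    set b := per (rscale p0 A) in hper hb.
    split.
      rewrite hper; case: (lerP 0 b) => hb0; nra.
    move=> h1'; apply: prod_eq1 => //.
    rewrite -/P; apply/eqP; rewrite eq_le P1 /=; nra.
  split.
    apply: (U_eq (@rows1 R n p p0')); first exact: per1.
    by move=> B hB; have [] := key B hB.
  move=> A hA hper i.
  have hs := unit_sum p0' hA.
  have [_ h] := key A hA.
  by have [_ ] := le_nrm_i (v := fun k => A i k) p1 pp (hs i); apply; apply: h.
move=> p0 p01 hU p pp.
have p00 : 0 < p0 by apply: lt_le_trans ltr01 p01.
have p0' : 0 < p by apply: lt_trans p00 pp.
have q0 : (0 < p0%:E)%E by rewrite lte_fin.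
have nR0 : 0 < n%:R :> R by rewrite ltr0n.
have hub := U_ub (unit_bound q0) hU.
set C0 := (n`!)%:R / (n%:R `^ (n%:R / p0)) in hU hub.
set C := (n`!)%:R / (n%:R `^ (n%:R / p)).
set M := (n%:R `^ (1 - p0 / p)) `^ p0^-1.
have M0 : 0 < M by rewrite powR_gt0 // powR_gt0.
have C00 : 0 < C0 by rewrite divr_gt0 ?ltr0n ?fact_gt0 ?powR_gt0.
have eMC : M ^+ n * C0 = C.
  rewrite /M /C0 /C -powRrM !nE // -expRM_natr.
  rewrite mulrCA; congr (_ * _).
  rewrite -expRB -expRN; congr expR.
  field; by rewrite ?gt_eqF.
have key : forall A : 'M[R]_n, rows_lp_unit p%:E A -> per A <= C /\
   (per A = C -> forall i, rnrm p0%:E A i = M).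
  move=> A hA.
  have hs := unit_sum p0' hA.
  have hnz : forall i, exists j, A i j != 0.
    by move=> i; apply: (exists_nz (p := p)) => //; exact: hs i.
  have [dpos [hB hper]] := transfer q0 hnz.
  have dle : forall i, 0 < rnrm p0%:E A i / M <= 1.
    move=> i; rewrite divr_gt0 ?dpos //= ler_pdivrMr // mul1r.
    by have [] := le_nrm_ii (v := fun k => A i k) hn p01 pp (hs i).
  have /andP[Q0 Q1] := prod_le1 dle.
  have hQ : \prod_(i < n) (rnrm p0%:E A i / M) * M ^+ n = \prod_(i < n) rnrm p0%:E A i.
    by rewrite prodf_div prodr_const card_ord divfK // expf_neq0 // gt_eqF.
  have hb := hub _ hB.
  have Mn0 : 0 < M ^+ n by rewrite exprn_gt0.
  rewrite -hQ in hper.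
  set Q := \prod_(i < n) (rnrm p0%:E A i / M) in hper Q0 Q1 hQ.
  set b := per (rscale p0%:E A) in hper hb.
  set Mn := M ^+ n in hper Mn0 eMC hQ.
  split.
    rewrite hper -eMC.
    have hqb : Q * b <= C0 by case: (lerP 0 b) => hb0; nra.
    have -> : Q * Mn * b = Mn * (Q * b) by ring.
    by rewrite ler_pM2l.
  move=> hC i.
  have hQ1 : Q = 1.
    apply/eqP; rewrite eq_le Q1 /=.
    have : Q * b = C0.
      apply: (mulfI (lt0r_neq0 Mn0)); rewrite eMC -hC hper; ring.
    nra.
  have := prod_eq1 dle hQ1 i => h.
  by rewrite -[LHS](divfK (lt0r_neq0 M0)) h mul1r.
split.
  apply: (U_eq (rowsC hn p0')); first exact: perC.
  by move=> B hB; have [] := key B hB.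
move=> A hA hper i j.
have hs := unit_sum p0' hA.
have [_ h] := key A hA.
by have [_ ] := le_nrm_ii (v := fun k => A i k) hn p01 pp (hs i); apply; apply: h.
Qed.
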